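(* Let $k$ be a positive integer and let $p>k(k+1)$ be a positive integer. Then for every integer $n$ there is an integer $m$ with $\mathbf r_k\!\left(\tfrac{n}{k+1}\right)=\mathbf r_k\!\left(\tfrac{m}{p}\right)$; that is, $\mathbf r_k\!\left(\tfrac1{k+1}\mathbb{Z}\right)\subseteq\mathbf r_k\!\left(\tfrac1p\mathbb{Z}\right)$.
   Context: For $x\in\mathbb{R}$, $\{x\}=x-\lfloor x\rfloor$ is the fractional part, and for $t\in\mathbb{R}$, $\mathbf r_k(t):=\big(\lfloor (k+1)\{t\}\rfloor,\lfloor (k+1)\{2t\}\rfloor,\ldots,\lfloor (k+1)\{kt\}\rfloor\big)\in\{0,\ldots,k\}^k$. *)

(* Defs.v *)
From mathcomp Require Import all_boot all_order all_algebra.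
From mathcomp Require Import reals.
Set Implicit Arguments. Unset Strict Implicit. Unset Printing Implicit Defensive.
Import Order.TTheory GRing.Theory Num.Theory.
Local Open Scope ring_scope.

Definition fracp {R : realType} (x : R) : R := x - (Num.floor x)%:~R.

Definition rvec {R : realType} (k : nat) (t : R) : seq int :=
  [seq Num.floor ((k.+1)%:R * fracp (j%:R * t)) | j <- iota 1 k].

(* Main.v *)
Require Import Defs.
From mathcomp Require Import all_boot all_order all_algebra.
From mathcomp Require Import reals.
From mathcomp Require Import ring lra zify.
Import Order.TTheory GRing.Theory Num.Theory.
Local Open Scope ring_scope.

Lemma key (R : realType) (k : nat) (q : int) (r : nat) (e : R) :
  (r <= k)%N -> 0 <= e -> (k.+1)%:R * e < 1 ->
  Num.floor ((k.+1)%:R * fracp (q%:~R + r%:R / (k.+1)%:R + e)) = r%:Z.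
Proof.
move=> hr he hke.
have hk : 0 < (k.+1)%:R :> R by rewrite ltr0n.
have hrk : r%:R <= k%:R :> R by rewrite ler_nat.
have hk1 : (k.+1)%:R = k%:R + 1 :> R by rewrite -natr1.
set y := r%:R / (k.+1)%:R + e.
have hy : (k.+1)%:R * y = r%:R + (k.+1)%:R * e.
  by rewrite /y mulrDr mulrCA divff ?mulr1 // lt0r_neq0.
have y0 : 0 <= y by rewrite /y addr_ge0 // divr_ge0.
have y1 : y < 1.
  have : (k.+1)%:R * y < (k.+1)%:R * 1 by rewrite hy mulr1; lra.
  by rewrite ltr_pM2l.
have -> : fracp (q%:~R + r%:R / (k.+1)%:R + e) = y.
  rewrite /fracp (_ : q%:~R + _ + e = q%:~R + y); last by rewrite /y addrA.
  have -> : Num.floor (q%:~R + y) = q.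
    apply: floor_def; rewrite intrD; apply/andP; split; lra.
  by rewrite addrC addKr.
have hke0 : 0 <= (k.+1)%:R * e by rewrite mulr_ge0 // ltW.
rewrite hy; apply: floor_def; rewrite intrD (_ : (r%:Z)%:~R = r%:R :> R) // (_ : (1%:Z)%:~R = 1 :> R) //. apply/andP; split; lra.
Qed.

Theorem mainTheorem11 (R : realType) (k p : nat) :
  (0 < k)%N -> (k * k.+1 < p)%N ->
  forall n : int, exists m : int,
    rvec k (n%:~R / (k.+1)%:R : R) = rvec k (m%:~R / p%:R : R) :> seq int.
Proof.
move=> k0 hp n.
set x : R := n%:~R * p%:R / (k.+1)%:R.
set m := Num.ceil x.
exists m.
have hk : 0 < (k.+1)%:R :> R by rewrite ltr0n.
have hp0 : 0 < p%:R :> R by rewrite ltr0n; lia.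
have hkp : (k%:R * (k.+1)%:R) < p%:R :> R by rewrite -natrM ltr_nat.
have [hm1 hm2] : (m%:~R - 1 < x) /\ (x <= m%:~R).
  by have /andP[] := ceil_itv x; rewrite intrD /= (_ : (-1)%:~R = -1 :> R) //.
have pn0 : p%:R != 0 :> R by rewrite lt0r_neq0.
have kn0 : (k.+1)%:R != 0 :> R by rewrite lt0r_neq0.
have kn0' : 1 + k%:R != 0 :> R by rewrite addrC natr1.
set d := m%:~R / p%:R - n%:~R / (k.+1)%:R : R.
have hpd : p%:R * d = m%:~R - x.
  rewrite /d /x; by field; rewrite ?pn0 ?kn0 ?kn0'.
have d0 : 0 <= d.
  have : 0 <= p%:R * d by lra.
  by rewrite pmulr_rge0.
rewrite /rvec; apply/eq_in_map => j; rewrite mem_iota => /andP [j1 j2].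
have jk : (j <= k)%N by lia.
set z := (j%:Z * n)%Z.
have hz := divz_eq z (k.+1)%:Z.
have [r hr] : exists r : nat, (z %% (k.+1)%:Z)%Z = r%:Z.
  have : (0 <= z %% (k.+1)%:Z)%Z by rewrite modz_ge0.
  case: (z %% (k.+1)%:Z)%Z => // r _; by exists r.
have rk : (r <= k)%N.
  have : (z %% (k.+1)%:Z < (k.+1)%:Z)%Z by rewrite ltz_pmod.
  rewrite hr; lia.
set q := (z %/ (k.+1)%:Z)%Z.
have hzR : j%:R * n%:~R = q%:~R * (k.+1)%:R + r%:R :> R.
  have := congr1 (fun y : int => y%:~R : R) hz.
  rewrite /= hr intrD intrM /z intrM /=. by [].
have hjk : j%:R <= k%:R :> R by rewrite ler_nat.
have hj0 : 0 <= j%:R :> R by [].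
have e1 : j%:R * (n%:~R / (k.+1)%:R) = q%:~R + r%:R / (k.+1)%:R + 0 :> R.
  rewrite addr0 mulrA hzR; by field; rewrite ?pn0 ?kn0 ?kn0'.
have e2 : j%:R * (m%:~R / p%:R) = q%:~R + r%:R / (k.+1)%:R + j%:R * d :> R.
  have e1' := e1; rewrite addr0 in e1'.
  rewrite -e1' -mulrDr /d; congr (_ * _); ring.
rewrite e1 e2 !key //.
- rewrite mulr_ge0 //.
- have h1 : (k.+1)%:R * (j%:R * d) <= (k.+1)%:R * (k%:R * d) :> R.
    by rewrite ler_pM2l // ler_wpM2r.
  have h2 : (k%:R * (k.+1)%:R) * d <= p%:R * d :> R.
    by rewrite ler_wpM2r // ltW.
  lra.
- lra.
Qed.
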